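(* Let $L$ be a finite-dimensional Lie superalgebra, let $r,s$ be factor sets on $L$, and put $R=(Z(L),L/Z(L),r)$, $S=(Z(L),L/Z(L),s)$, $Z_R=\{(x,0)\in R\}$, $Z_S=\{(x,0)\in S\}$. (1) Let $\lambda:R\to S$ be a Lie superalgebra isomorphism with $\lambda(Z_R)=Z_S$, and let $\mu\in\mathrm{Aut}(L/Z(L))$, $\nu\in\mathrm{Aut}(Z(L))$ be the automorphisms induced by $\lambda$, i.e. $\lambda(0,\bar a)+Z_S=(0,\mu(\bar a))+Z_S$ and $\lambda(x,0)=(\nu(x),0)$ for all $\bar a\in L/Z(L)$, $x\in Z(L)$. Then there exists an even linear map $\gamma:L/Z(L)\to Z(L)$ such that $\nu\big(r(\bar a,\bar b)+\gamma([\bar a,\bar b])\big)=s(\mu(\bar a),\mu(\bar b))$ for all $\bar a,\bar b\in L/Z(L)$. (2) Conversely, if $\mu\in\mathrm{Aut}(L/Z(L))$, $\nu\in\mathrm{Aut}(Z(L))$ and $\delta:L/Z(L)\to Z(L)$ is an even linear map such that $\nu\big(r(\bar a,\bar b)+\delta([\bar a,\bar b])\big)=s(\mu(\bar a),\mu(\bar b))$ for all $\bar a,\bar b$, then there exists a Lie superalgebra isomorphism $\lambda:R\to S$ induced by $\mu$ and $\nu$ (in the sense of (1)) with $\lambda(Z_R)=Z_S$.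
   Context: Lie superalgebras over a field of characteristic $\neq 2,3$; homomorphisms and ''even linear maps'' are degree-preserving. $Z(L)$ is the center. A factor set on $L$ is a bilinear map $r:L/Z(L)\times L/Z(L)\to Z(L)$ with, for homogeneous $\bar a,\bar b,\bar c$: $r(\bar a,\bar b)\in Z(L)_{|\bar a|+|\bar b|}$; $r(\bar a,\bar b)=-(-1)^{|\bar a||\bar b|}r(\bar b,\bar a)$; $r([\bar a,\bar b],\bar c)=r(\bar a,[\bar b,\bar c])-(-1)^{|\bar a||\bar b|}r(\bar b,[\bar a,\bar c])$. For a factor set $r$, $(Z(L),L/Z(L),r)$ is the Lie superalgebra of pairs $(x,\bar a)$, $x\in Z(L)$, $\bar a\in L/Z(L)$, graded componentwise, with componentwise addition and bracket $[(x_1,\bar a),(x_2,\bar b)]=(r(\bar a,\bar b),[\bar a,\bar b])$. *)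

(* Defs.v *)
From HB Require Import structures.
From mathcomp Require Import all_boot all_order all_algebra.
Set Implicit Arguments. Unset Strict Implicit. Unset Printing Implicit Defensive.
Import GRing.Theory.
Local Open Scope ring_scope.

(* Parity is a bool: false = even (degree 0), true = odd (degree 1).
   A graded vector space is an lmodType V with a predicate
   [par i v] meaning "v is homogeneous of degree i", i.e. v \in V_i. *)

Section Defs.
Variable K : fieldType.

Definition ssign (i j : bool) : K := (-1) ^+ (i && j).

Definition lin (U V : lmodType K) (f : U -> V) : Prop :=
  forall (a : K) (u v : U), f (a *: u + v) = a *: f u + f v.

Definition bilin (U V W : lmodType K) (f : U -> V -> W) : Prop :=
  (forall v, lin (fun u => f u v)) /\ (forall u, lin (f u)).

Definition grading (V : lmodType K) (par : bool -> V -> Prop) : Prop :=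
  [/\ forall i, par i 0,
      forall i (a : K) u v, par i u -> par i v -> par i (a *: u + v),
      forall v, par false v -> par true v -> v = 0
    & forall v, exists v0 v1, [/\ par false v0, par true v1 & v = v0 + v1]].

Definition is_superLie (V : lmodType K) (par : bool -> V -> Prop)
    (br : V -> V -> V) : Prop :=
  [/\ grading par, bilin br,
      forall i j u v, par i u -> par j v -> par (i (+) j) (br u v),
      forall i j u v, par i u -> par j v -> br u v = - (ssign i j *: br v u)
    & forall i j k u v w, par i u -> par j v -> par k w ->
        br u (br v w) = br (br u v) w + ssign i j *: br v (br u w)].

Definition even_lin (U V : lmodType K) (parU : bool -> U -> Prop)
    (parV : bool -> V -> Prop) (f : U -> V) : Prop :=
  lin f /\ forall i u, parU i u -> parV i (f u).

Definition superLie_hom (U V : lmodType K) (parU : bool -> U -> Prop)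
    (brU : U -> U -> U) (parV : bool -> V -> Prop) (brV : V -> V -> V)
    (f : U -> V) : Prop :=
  even_lin parU parV f /\ forall u v, f (brU u v) = brV (f u) (f v).

Definition superLie_iso (U V : lmodType K) (parU : bool -> U -> Prop)
    (brU : U -> U -> U) (parV : bool -> V -> Prop) (brV : V -> V -> V)
    (f : U -> V) : Prop :=
  superLie_hom parU brU parV brV f /\ bijective f.

Definition center (V : lmodType K) (br : V -> V -> V) (x : V) : Prop :=
  forall y, br x y = 0.

(* [Z] (with grading parZ) together with iota : Z -> L is the center Z(L):
   iota is an injective linear map onto Z(L), and the grading of Z is
   the one induced from L. *)
Definition is_center_of (L : lmodType K) (parL : bool -> L -> Prop)
    (brL : L -> L -> L) (Z : lmodType K) (parZ : bool -> Z -> Prop)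
    (iota : Z -> L) : Prop :=
  [/\ lin iota, injective iota,
      forall x, center brL x <-> exists z, iota z = x
    & forall i z, parZ i z <-> parL i (iota z)].

(* [Q] (with grading parQ, bracket brQ) together with pi : L -> Q is the
   quotient L/Z(L): pi is a surjective Lie superalgebra homomorphism whose
   kernel is Z(L); Q is a Lie superalgebra. *)
Definition is_quotient_by_center (L : lmodType K) (parL : bool -> L -> Prop)
    (brL : L -> L -> L) (Q : lmodType K) (parQ : bool -> Q -> Prop)
    (brQ : Q -> Q -> Q) (pi : L -> Q) : Prop :=
  [/\ is_superLie parQ brQ, superLie_hom parL brL parQ brQ pi,
      forall q, exists x, pi x = q
    & forall x, pi x = 0 <-> center brL x].

Definition factor_set (Q : lmodType K) (parQ : bool -> Q -> Prop)
    (brQ : Q -> Q -> Q) (Z : lmodType K) (parZ : bool -> Z -> Prop)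
    (r : Q -> Q -> Z) : Prop :=
  [/\ bilin r,
      forall i j a b, parQ i a -> parQ j b -> parZ (i (+) j) (r a b),
      forall i j a b, parQ i a -> parQ j b -> r a b = - (ssign i j *: r b a)
    & forall i j k a b c, parQ i a -> parQ j b -> parQ k c ->
        r (brQ a b) c = r a (brQ b c) - ssign i j *: r b (brQ a c)].

(* The Lie superalgebra (Z(L), L/Z(L), r): pairs (x, a), graded
   componentwise, bracket [(x1,a),(x2,b)] = (r(a,b), [a,b]). *)
Definition pair_par (Z Q : lmodType K) (parZ : bool -> Z -> Prop)
    (parQ : bool -> Q -> Prop) (i : bool) (p : (Z * Q)%type) : Prop :=
  parZ i p.1 /\ parQ i p.2.

Definition pair_br (Z Q : lmodType K) (brQ : Q -> Q -> Q) (r : Q -> Q -> Z)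
    (p1 p2 : (Z * Q)%type) : (Z * Q)%type :=
  (r p1.2 p2.2, brQ p1.2 p2.2).

End Defs.

(* Main.v *)
Require Import Defs.
From HB Require Import structures.
From mathcomp Require Import all_boot all_order all_algebra.
Import GRing.Theory.
Local Open Scope ring_scope.


Set Implicit Arguments. Unset Strict Implicit.
Section Helpers.
Variable K : fieldType.

Lemma lin_add (U V : lmodType K) (f : U -> V) : lin f ->
  forall u v, f (u + v) = f u + f v.
Proof. by move=> h u v; have := h 1 u v; rewrite !scale1r. Qed.

Lemma lin0 (U V : lmodType K) (f : U -> V) : lin f -> f 0 = 0.
Proof.
move=> h; have e := lin_add h 0 0; rewrite addr0 -[in LHS](addr0 (f 0)) in e.
by rewrite (addrI _ e).
Qed.

Variable (V : lmodType K) (par : bool -> V -> Prop).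
Hypothesis gr : grading par.

Lemma grad0 i : par i 0.
Proof. by case: gr. Qed.

Lemma grad_add i u v : par i u -> par i v -> par i (u + v).
Proof. by case: gr => _ h _ _ hu hv; have := h i 1 u v hu hv; rewrite scale1r. Qed.

Lemma grad_opp i u : par i u -> par i (- u).
Proof.
case: gr => h0 h _ _ hu; have := h i (-1) u 0 hu (h0 i); by rewrite addr0 scaleN1r.
Qed.

Lemma grad_both u : par false u -> par true u -> u = 0.
Proof. by case: gr => _ _ h _; apply: h. Qed.

Lemma grad_sum0 i u w : par i u -> par (~~ i) w -> u + w = 0 -> u = 0 /\ w = 0.
Proof.
move=> hu hw e.
have eu : u = - w by apply/eqP; rewrite -addr_eq0 e.
have hu' : par (~~ i) u by rewrite eu; apply: grad_opp.
have u0 : u = 0 by case: i hu hw hu' => /= *; apply: grad_both.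
by split => //; move: e; rewrite u0 add0r.
Qed.

End Helpers.

Lemma cent_split (K : fieldType) (L : lmodType K) par br :
  is_superLie par br -> forall v v0 v1 : L, center br v ->
  par false v0 -> par true v1 -> v = v0 + v1 -> center br v0 /\ center br v1.
Proof.
move=> [gr [bl br'] pb _ _] v v0 v1 cv h0 h1 ev.
have hom j y : par j y -> br v0 y = 0 /\ br v1 y = 0.
  move=> hy.
  have /= e := lin_add (bl y) v0 v1.
  rewrite -ev cv in e.
  have p0 := pb _ _ _ _ h0 hy; have p1 := pb _ _ _ _ h1 hy.
  case: j hy p0 p1 => hy /= p0 p1.
    have e' : br v1 y + br v0 y = 0 by rewrite addrC -e.
    have [a b] := grad_sum0 gr p1 p0 e'.
    by split.
  by have [a b] := grad_sum0 gr p0 p1 (esym e).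
case: gr => _ _ _ dec.
split => y; have [y0 [y1 [hy0 hy1 ->]]] := dec y.
  by rewrite (lin_add (br' v0)) (hom _ _ hy0).1 (hom _ _ hy1).1 addr0.
by rewrite (lin_add (br' v1)) (hom _ _ hy0).2 (hom _ _ hy1).2 addr0.
Qed.

Lemma gradZ (K : fieldType) (L : lmodType K) parL brL (Z : lmodType K) parZ
  (iota : Z -> L) : is_superLie parL brL -> is_center_of parL brL parZ iota ->
  grading parZ.
Proof.
move=> HL [li inj cent pz]; have gr : grading parL by case: HL.
split.
- by move=> i; apply/pz; rewrite (lin0 li); apply: grad0.
- move=> i a u v /pz hu /pz hv; apply/pz; rewrite li.
  by case: gr => _ h _ _; apply: h.
- move=> v /pz h0 /pz h1; apply: inj; rewrite (lin0 li); exact: (grad_both gr h0 h1).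
- move=> z; case: (gr) => _ _ _ dec; have [v0 [v1 [h0 h1 e]]] := dec (iota z).
  have cz : center brL (iota z) by apply/cent; exists z.
  have [c0 c1] := cent_split HL cz h0 h1 e.
  have [z0 e0] := (cent v0).1 c0; have [z1 e1] := (cent v1).1 c1.
  exists z0, z1; split; [apply/pz; rewrite e0 // | apply/pz; rewrite e1 // |].
  by apply: inj; rewrite (lin_add li) e0 e1.
Qed.

Lemma inv_par (K : fieldType) (Z : lmodType K) parZ (nu nuinv : Z -> Z) :
  grading parZ -> even_lin parZ parZ nu -> cancel nu nuinv -> cancel nuinv nu ->
  forall i y, parZ i y -> parZ i (nuinv y).
Proof.
move=> gr [ln pn] nuK nuinvK i y hy.
have nuinj : forall w, nu w = 0 -> w = 0.
  by move=> w e; rewrite -(nuK w) e -{1}(lin0 ln) nuK.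
case: (gr) => _ _ _ dec; have [w0 [w1 [h0 h1 e]]] := dec (nuinv y).
have ey : y = nu w0 + nu w1 by rewrite -(lin_add ln) -e nuinvK.
case: i hy => hy.
- have b : parZ true (nu w1 - y).
    by apply: (grad_add gr); [exact: pn | exact: (grad_opp gr)].
  have e' : nu w0 + (nu w1 - y) = 0 by rewrite addrA ey subrr.
  have [a _] := grad_sum0 gr (pn _ _ h0) b e'.
  by rewrite e (nuinj _ a) add0r.
- have a : parZ false (nu w0 - y).
    by apply: (grad_add gr); [exact: pn | exact: (grad_opp gr)].
  have e' : nu w0 - y + nu w1 = 0 by rewrite ey addrAC subrr.
  have [_ b] := grad_sum0 gr a (pn _ _ h1) e'.
  by rewrite e (nuinj _ b) addr0.
Qed.

Unset Implicit Arguments. Set Strict Implicit.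
Theorem lemma3p5 (K : fieldType)
    (char2 : (2%:R : K) != 0) (char3 : (3%:R : K) != 0)
    (L : vectType K) (parL : bool -> L -> Prop) (brL : L -> L -> L)
    (HL : is_superLie parL brL)
    (Z : lmodType K) (parZ : bool -> Z -> Prop) (iota : Z -> L)
    (HZ : is_center_of parL brL parZ iota)
    (Q : lmodType K) (parQ : bool -> Q -> Prop) (brQ : Q -> Q -> Q)
    (pi : L -> Q) (HQ : is_quotient_by_center parL brL parQ brQ pi)
    (r s : Q -> Q -> Z)
    (Hr : factor_set parQ brQ parZ r) (Hs : factor_set parQ brQ parZ s) :
  (* (1) *)
  (forall (lambda : (Z * Q)%type -> (Z * Q)%type) (mu : Q -> Q) (nu : Z -> Z),
     superLie_iso (pair_par parZ parQ) (pair_br brQ r)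
                  (pair_par parZ parQ) (pair_br brQ s) lambda ->
     (forall p, (exists x, lambda (x, 0) = p) <-> p.2 = 0) ->
     superLie_iso parQ brQ parQ brQ mu ->
     (even_lin parZ parZ nu /\ bijective nu) ->
     (forall a : Q, exists z : Z, lambda (0, a) = (0, mu a) + (z, 0)) ->
     (forall x : Z, lambda (x, 0) = (nu x, 0)) ->
     exists gamma : Q -> Z, even_lin parQ parZ gamma /\
       forall a b : Q, nu (r a b + gamma (brQ a b)) = s (mu a) (mu b)) /\
  (* (2) *)
  (forall (mu : Q -> Q) (nu : Z -> Z) (delta : Q -> Z),
     superLie_iso parQ brQ parQ brQ mu ->
     (even_lin parZ parZ nu /\ bijective nu) ->
     even_lin parQ parZ delta ->
     (forall a b : Q, nu (r a b + delta (brQ a b)) = s (mu a) (mu b)) ->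
     exists lambda : (Z * Q)%type -> (Z * Q)%type,
       [/\ superLie_iso (pair_par parZ parQ) (pair_br brQ r)
                        (pair_par parZ parQ) (pair_br brQ s) lambda,
           forall p, (exists x, lambda (x, 0) = p) <-> p.2 = 0,
           forall a : Q, exists z : Z, lambda (0, a) = (0, mu a) + (z, 0)
         & forall x : Z, lambda (x, 0) = (nu x, 0)]).
Proof.
have grZ := gradZ HL HZ.
split.
- move=> lambda mu nu [[[linl parl] homl] bijl] HZR Hmu [[linnu parnu] [nuinv nuK nuinvK]] Hz Hx.
  exists (fun c => nuinv (lambda (0, c)).1); split.
  + split.
    * move=> a u v /=; apply: (can_inj nuK); rewrite linnu !nuinvK.
      have e : ((0 : Z), a *: u + v) = a *: (0, u) + (0, v).
        apply: (@eq_trans _ _ (a *: (0:Z) + 0, a *: u + v)); first by rewrite scaler0 addr0.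
        reflexivity.
      by rewrite e linl.
    * move=> i c hc; apply: (inv_par grZ (conj linnu parnu) nuK nuinvK).
      by have [] := parl i (0, c) (conj (grad0 grZ i) hc).
  + move=> a b; rewrite (lin_add linnu) nuinvK.
    have h := homl (0, a) (0, b); rewrite /pair_br /= in h.
    have ma : forall c, (lambda (0, c)).2 = mu c.
      by move=> c; have [zc ec] := Hz c; rewrite ec; exact: addr0.
    rewrite !ma in h.
    have e : (r a b, brQ a b) = (r a b, 0) + (0, brQ a b).
      apply: (@eq_trans _ _ (r a b + 0, 0 + brQ a b)); first by rewrite addr0 add0r.
      reflexivity.
    rewrite e (lin_add linl) Hx in h.
    by have := congr1 fst h.
- move=> mu nu delta [[[linmu parmu] hommu] [muinv muK muinvK]] [[linnu parnu] [nuinv nuK nuinvK]] [lind pard] Heq.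
  exists (fun p => (nu (p.1 + delta p.2), mu p.2)); split.
  + split; [split; [split|] |].
    * move=> a [x1 c1] [x2 c2] /=; congr pair; last exact: linmu.
      by rewrite lind -linnu scalerDr addrACA.
    * move=> i [x c] [hx hc] /=; split; first apply: parnu.
        by apply: grad_add => //; apply: pard.
      exact: parmu.
    * by move=> [x1 a] [x2 b]; rewrite /pair_br /= Heq hommu.
    * exists (fun p => (nuinv p.1 - delta (muinv p.2), muinv p.2)).
        by move=> [x a] /=; rewrite nuK muK addrK.
      by move=> [y c] /=; rewrite muinvK subrK nuinvK.
  + move=> [y c] /=; split.
      by move=> [x [_ <-]]; rewrite (lin0 linmu).
    move=> ->; exists (nuinv y); by rewrite /= (lin0 lind) addr0 nuinvK (lin0 linmu).
  + move=> a; exists (nu (delta a)).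
    rewrite /= add0r.
    have -> : (0 : Z, mu a) + (nu (delta a), 0) = (0 + nu (delta a), mu a + 0) by [].
    by rewrite add0r addr0.
  + by move=> x; rewrite /= (lin0 lind) addr0 (lin0 linmu).
Qed.
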